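(* Let $n \ge 1$, let $F \in \mathbb{C}^{n \times n}$ be a unitary matrix with $|F_{ij}|^2 \leq \frac{c}{n}$ for all $i,j$ (for some constant $c>0$), let $I \in \mathbb{C}^{n\times n}$ be the identity matrix, and let $A = [F \enspace I] \in \mathbb{C}^{n \times 2n}$. Let $y = F\hat{x} + e$, where $\hat{x}, e \in \mathbb{C}^n$ and $e$ is $t$-sparse. Let $1 \leq k \leq n$ be an integer, let $T$ be a positive integer, and let $x^{[T+1]} = \mathrm{IHT}(y,A,k,t,T)$ be the output of the $(k,t)$-Iterative Hard Thresholding algorithm described in the context. Write $x^{[T+1]} = [\hat{x}^{[T+1]} \enspace e^{[T+1]}]^T$ with $\hat{x}^{[T+1]}, e^{[T+1]} \in \mathbb{C}^n$. (a) Define $\rho := \sqrt{27}\sqrt{\frac{ckt}{n}}$ and $\tau$ by $\tau(1-\rho) := \sqrt{3}\sqrt{1 + 2\sqrt{\frac{ckt}{n}}}$. If $0<\rho<1$, then $$\| \hat{x}^{[T+1]} - \hat{x}_{h(k)} \|_2 \leq \rho^{T+1} \sqrt{ \| \hat{x}_{h(k)} \|_2^2 + \|e\|_2^2 } + \tau\| \hat{x}_{t(k)} \|_2 .$$ Moreover, for any $0<\epsilon<1$ and any $T \geq \frac{\log(1/\epsilon) + \log\left(\sqrt{ \| \hat{x}_{h(k)} \|_2^2 + \|e\|_2^2 }\right)}{\log(1/\rho)}$, we have $\| \hat{x}^{[T+1]} - \hat{x}_{h(k)} \|_2 \leq \tau\| \hat{x}_{t(k)} \|_2 + \epsilon$.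 (b) Define instead $\rho := 2\sqrt{2}\sqrt{\frac{ckt}{n}}$ and $\tau$ by $\tau(1-\rho) := 2$. If $0<\rho<1$, then $$\| \hat{x}^{[T+1]} - \hat{x}_{h(k)} \|_2 \leq \rho^{T+1}\| \hat{x}_{h(k)}\|_2 + \tau\left(\|\hat{x}_{t(k)}\|_2 + \|e\|_2\right).$$ Moreover, for any $0<\epsilon<1$ and any $T \geq \frac{\log(1/\epsilon) + \log(\| \hat{x}_{h(k)}\|_2)}{\log(1/\rho)}$, we have $\| \hat{x}^{[T+1]} - \hat{x}_{h(k)} \|_2 \leq \tau\left(\|\hat{x}_{t(k)}\|_2 + \|e\|_2\right) + \epsilon$.
   Context: A vector is $k$-sparse if it has at most $k$ nonzero entries. For $x \in \mathbb{C}^n$, $x_{h(k)}$ denotes a $k$-sparse vector in $\mathbb{C}^n$ consisting of $k$ largest (in absolute value) entries of $x$ with all other entries set to zero (ties broken by a fixed predefined rule), and $x_{t(k)} := x - x_{h(k)}$. For $x = [x_1 \enspace x_2]^T \in \mathbb{C}^{2n}$ with $x_1,x_2\in\mathbb{C}^n$, $x_{h(k,t)} := [ (x_1)_{h(k)} \enspace (x_2)_{h(t)} ]^T$. The $(k,t)$-Iterative Hard Thresholding algorithm $\mathrm{IHT}(y,A,k,t,T)$, for $y\in\mathbb{C}^n$, $A \in \mathbb{C}^{n\times 2n}$ and positive integers $k,t,T$: set $x^{[0]} = 0 \in \mathbb{C}^{2n}$; for $i = 0,1,\dots,T$ set $z^{[i+1]} = x^{[i]} + A^*(y - Ax^{[i]})$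 and $x^{[i+1]} = (z^{[i+1]})_{h(k,t)}$; return $x^{[T+1]}$. Here $A^*$ is the conjugate transpose. *)

(* Defs.v *)
From HB Require Import structures.
From mathcomp Require Import all_boot all_order all_algebra.
From mathcomp Require Import complex.
From mathcomp Require Import all_classical all_reals exp.
Set Implicit Arguments. Unset Strict Implicit. Unset Printing Implicit Defensive.
Import Order.TTheory GRing.Theory Num.Theory.
Local Open Scope ring_scope.

Section Defs.
Variable R : realType.
Local Notation C := R[i].

Definition cabs (z : C) : R := Normc.normc z.

Definition norm2 n (v : 'cV[C]_n) : R := Num.sqrt (\sum_(i < n) cabs (v i ord0) ^+ 2).

Definition adj m n (A : 'M[C]_(m, n)) : 'M[C]_(n, m) := \matrix_(i, j) conjc (A j i).

Definition unitary n (F : 'M[C]_n) : Prop :=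
  adj F *m F = 1%:M /\ F *m adj F = 1%:M.

Definition sparse n (k : nat) (v : 'cV[C]_n) : Prop := (#|[set i | v i ord0 != 0%R]| <= k)%N.

(* Hard thresholding x_{h(k)}: keep the k largest entries in absolute value,
   ties broken by the fixed rule "smaller index first": entry i is kept iff
   fewer than k indices j precede it, where j precedes i when
   |x_j| > |x_i|, or |x_j| = |x_i| and j < i. *)
Definition precedes n (v : 'cV[C]_n) (j i : 'I_n) : bool :=
  (cabs (v i ord0) < cabs (v j ord0)) || ((cabs (v j ord0) == cabs (v i ord0)) && (j < i)%N).

Definition hthr n (k : nat) (v : 'cV[C]_n) : 'cV[C]_n :=
  \col_i (if (#|[set j | precedes v j i]| < k)%N then v i ord0 else 0%R).

Definition tthr n (k : nat) (v : 'cV[C]_n) : 'cV[C]_n := v - hthr k v.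

Definition hthr2 n (k t : nat) (x : 'cV[C]_(n + n)) : 'cV[C]_(n + n) :=
  col_mx (hthr k (usubmx x)) (hthr t (dsubmx x)).

Definition iht_step n (y : 'cV[C]_n) (A : 'M[C]_(n, n + n)) (k t : nat)
  (x : 'cV[C]_(n + n)) : 'cV[C]_(n + n) :=
  hthr2 k t (x + adj A *m (y - A *m x)).

(* IHT(y,A,k,t,T): x^[0] = 0, iterations i = 0..T, returns x^[T+1] *)
Definition IHT n (y : 'cV[C]_n) (A : 'M[C]_(n, n + n)) (k t T : nat) : 'cV[C]_(n + n) :=
  iter T.+1 (iht_step y A k t) 0.

End Defs.

(* Main.v *)
Require Import Defs.
From HB Require Import structures.
From mathcomp Require Import all_boot all_order all_algebra.
From mathcomp Require Import complex.
From mathcomp Require Import all_classical all_reals exp.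
Import Order.TTheory GRing.Theory Num.Theory.
Local Open Scope ring_scope.
From mathcomp Require Import ring lra zify.
Set Implicit Arguments. Unset Strict Implicit. Unset Printing Implicit Defensive.


Section Aux.
Variable R : realType.
Local Notation C := R[i].

Lemma cabs_ge0 (z : C) : 0 <= cabs z.
Proof. by case: z => a b; rewrite /cabs /= sqrtr_ge0. Qed.

Lemma cabs0 : cabs (0 : C) = 0.
Proof. exact: Normc.normc0. Qed.

Lemma cabsM (x y : C) : cabs (x * y) = cabs x * cabs y.
Proof. exact: Normc.normcM. Qed.

Lemma cabsN (x : C) : cabs (- x) = cabs x.
Proof. exact: normcN. Qed.

Lemma cabsD (x y : C) : cabs (x + y) <= cabs x + cabs y.
Proof. exact: le_normcD. Qed.

Lemma cabsJ (x : C) : cabs (conjc x) = cabs x.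
Proof. by case: x => a b; rewrite /cabs /= sqrrN. Qed.

Lemma cabs2 (x : C) : (((cabs x) ^+ 2)%:C)%C = conjc x * x.
Proof.
case: x => a b; rewrite /cabs /= sqr_sqrtr ?addr_ge0 ?sqr_ge0 //.
apply/eqP; rewrite eq_complex /=; apply/andP; split; apply/eqP; ring.
Qed.

Lemma cabs_sum (I : Type) (r : seq I) (P : pred I) (f : I -> C) :
  cabs (\sum_(i <- r | P i) f i) <= \sum_(i <- r | P i) cabs (f i).
Proof.
apply: (big_ind2 (fun x y => cabs x <= y)); first by rewrite cabs0.
  by move=> x1 x2 y1 y2 h1 h2; apply: le_trans (cabsD _ _) (lerD h1 h2).
by [].
Qed.

End Aux.


Section Sums.
Variable R : realType.

Lemma cauchy_schwarz (I : finType) (A : {pred I}) (a b : I -> R) :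
  (\sum_(i in A) a i * b i) ^+ 2 <=
  (\sum_(i in A) a i ^+ 2) * (\sum_(i in A) b i ^+ 2).
Proof.
set P := \sum_(i in A) a i ^+ 2; set Q := \sum_(i in A) b i ^+ 2.
set X := \sum_(i in A) a i * b i.
have Q0 : 0 <= Q by apply: sumr_ge0 => i _; exact: sqr_ge0.
have key : 0 <= \sum_(i in A) (Q * a i - X * b i) ^+ 2.
  by apply: sumr_ge0 => i _; exact: sqr_ge0.
have E : \sum_(i in A) (Q * a i - X * b i) ^+ 2 =
  Q ^+ 2 * P - 2 * Q * X * X + X ^+ 2 * Q.
  rewrite (eq_bigr (fun i => Q ^+ 2 * a i ^+ 2 - (2 * Q * X) * (a i * b i) + X ^+ 2 * b i ^+ 2)); last by move=> i _; ring.
  by rewrite big_split /= sumrB -!mulr_sumr -/P -/Q -/X.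
rewrite E in key; move: key; have [Qz|Qp] := eqVneq Q 0.
  have bz : forall i, i \in A -> b i = 0.
    move=> i Ai; apply/eqP; rewrite -sqrf_eq0; apply/eqP.
    move/eqP: Qz; rewrite /Q psumr_eq0; last by move=> j _; exact: sqr_ge0.
    by move/allP => /(_ i); rewrite mem_index_enum => /(_ isT); rewrite Ai => /eqP.
  have -> : X = 0 by rewrite /X big1 // => i Ai; rewrite bz // mulr0.
  by rewrite Qz; lra.
move=> h.
have Qpos : 0 < Q by rewrite lt_def Qp Q0.
have : 0 <= Q * (Q * P - X ^+ 2) by move: h; rewrite (_ : _ + _ = Q * (Q * P - X ^+ 2)) //; ring.
by rewrite pmulr_rge0 // subr_ge0 mulrC.
Qed.


Local Notation C := R[i].

Definition sqs n (A : {set 'I_n}) (v : 'cV[C]_n) : R :=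
  \sum_(i in A) cabs (v i ord0) ^+ 2.

Lemma sqs_ge0 n (A : {set 'I_n}) v : 0 <= sqs A v.
Proof. by apply: sumr_ge0 => i _; exact: sqr_ge0. Qed.

Lemma norm2E n (v : 'cV[C]_n) : norm2 v = Num.sqrt (sqs [set: 'I_n] v).
Proof. by rewrite /norm2 /sqs; congr Num.sqrt; apply: eq_bigl => i; rewrite finset.in_setT. Qed.

Lemma norm2_ge0 n (v : 'cV[C]_n) : 0 <= norm2 v.
Proof. exact: sqrtr_ge0. Qed.

Lemma sqs_sub n (A B : {set 'I_n}) v : A \subset B -> sqs A v <= sqs B v.
Proof.
move=> AB; rewrite /sqs [X in _ <= X](bigID (mem A)) /=.
have -> : \sum_(i in B | i \in A) cabs (v i ord0) ^+ 2 = sqs A v.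
  by apply: eq_bigl => i; case iA: (i \in A); rewrite ?andbF ?andbT // (fintype.subsetP AB).
by rewrite lerDl; apply: sumr_ge0 => i _; exact: sqr_ge0.
Qed.

Lemma sqsN n (A : {set 'I_n}) v : sqs A (- v) = sqs A v.
Proof. by apply: eq_bigr => i _; rewrite mxE cabsN. Qed.

Lemma minkowski n (A : {set 'I_n}) (v w : 'cV[C]_n) :
  Num.sqrt (sqs A (v + w)) <= Num.sqrt (sqs A v) + Num.sqrt (sqs A w).
Proof.
set P := sqs A v; set Q := sqs A w.
set X := \sum_(i in A) cabs (v i ord0) * cabs (w i ord0).
have P0 : 0 <= P := sqs_ge0 _ _. have Q0 : 0 <= Q := sqs_ge0 _ _.
have h1 : sqs A (v + w) <= P + 2 * X + Q.
  rewrite /P /Q /X /sqs mulr_sumr -!big_split /=; apply: ler_sum => i _.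
  rewrite mxE; have := cabsD (v i ord0) (w i ord0).
  have := cabs_ge0 (v i ord0); have := cabs_ge0 (w i ord0);
  have := cabs_ge0 (v i ord0 + w i ord0); nra.
have h2 : X <= Num.sqrt P * Num.sqrt Q.
  rewrite -sqrtrM // (le_trans (ler_norm _)) // -sqrtr_sqr ler_sqrt ?mulr_ge0 //.
  exact: cauchy_schwarz.
have h3 : sqs A (v + w) <= (Num.sqrt P + Num.sqrt Q) ^+ 2.
  have := sqr_sqrtr P0; have := sqr_sqrtr Q0; nra.
rewrite -[X in _ <= X]ger0_norm ?addr_ge0 ?sqrtr_ge0 // -sqrtr_sqr.
by rewrite ler_sqrt // sqr_ge0.
Qed.

Lemma minkowskiB n (A : {set 'I_n}) (v w : 'cV[C]_n) :
  Num.sqrt (sqs A (v - w)) <= Num.sqrt (sqs A v) + Num.sqrt (sqs A w).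
Proof. by rewrite -(sqsN A w) minkowski. Qed.


Lemma coh n (M : 'M[C]_n) (g : R) (U W : {set 'I_n}) (w : 'cV[C]_n) :
  (forall i j, cabs (M i j) ^+ 2 <= g) -> (forall j, j \notin W -> w j ord0 = 0) ->
  sqs U (M *m w) <= #|U|%:R * (#|W|%:R * g) * sqs [set: 'I_n] w.
Proof.
move=> hM hw.
have pt : forall i, cabs ((M *m w) i ord0) ^+ 2 <= #|W|%:R * g * sqs [set: 'I_n] w.
  move=> i; rewrite mxE.
  have -> : \sum_j M i j * w j ord0 = \sum_(j in W) M i j * w j ord0.
    rewrite [RHS]big_mkcond /=; apply: eq_bigr => j _.
    by case: ifP => // /negbT /hw ->; rewrite mulr0.
  have h1 : cabs (\sum_(j in W) M i j * w j ord0) <=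
            \sum_(j in W) cabs (M i j) * cabs (w j ord0).
    by rewrite (le_trans (cabs_sum _ _ _)) //; apply: ler_sum => j _; rewrite cabsM.
  have h2 := cauchy_schwarz W (fun j => cabs (M i j)) (fun j => cabs (w j ord0)).
  have h3 : \sum_(j in W) cabs (M i j) ^+ 2 <= #|W|%:R * g.
    by rewrite (le_trans (ler_sum _ (fun j _ => hM i j))) // sumr_const mulr_natl.
  have h4 : sqs W w <= sqs [set: 'I_n] w by apply: sqs_sub; exact: finset.subsetT.
  have h5 : 0 <= \sum_(j in W) cabs (M i j) ^+ 2 by apply: sumr_ge0 => j _; exact: sqr_ge0.
  have h6 : 0 <= \sum_(j in W) cabs (M i j) * cabs (w j ord0).
    by apply: sumr_ge0 => j _; rewrite mulr_ge0 ?cabs_ge0.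
  have h7 := sqs_ge0 W w.
  have h8 := cabs_ge0 (\sum_(j in W) M i j * w j ord0).
  rewrite /sqs in h4 h7.
  apply: (le_trans (y := (\sum_(j in W) cabs (M i j) * cabs (w j ord0)) ^+ 2)); first nra.
  apply: (le_trans h2); apply: (le_trans (y := #|W|%:R * g * \sum_(j in W) cabs (w j ord0) ^+ 2)).
    by rewrite ler_wpM2r.
  by rewrite ler_wpM2l // (le_trans h5).
rewrite [X in X <= _]/sqs (le_trans (ler_sum _ (fun i _ => pt i))) // sumr_const.
by rewrite !mulrA -!mulrnAl [#|U|%:R * _]mulr_natl. Qed.

End Sums.


Lemma zmodE1 (V : zmodType) (a b c d : V) : a + (b + c - (a + d)) = b + (c - d).
Proof. by rewrite opprD addrCA !addrA addrK. Qed.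
Lemma zmodE2 (V : zmodType) (a b c v : V) : v + (b + c - (a + v)) = c + (b - a).
Proof. by rewrite [a + v]addrC zmodE1 addrCA. Qed.

Section Mat.
Variable R : realType.
Local Notation C := R[i].

Lemma sqs_adj n (v : 'cV[C]_n) : ((sqs [set: 'I_n] v)%:C)%C = (adj v *m v) ord0 ord0.
Proof.
rewrite /sqs mxE rmorph_sum /=; rewrite [RHS](eq_bigl (fun i => i \in [set: 'I_n])); last first.
  by move=> i; rewrite finset.in_setT.
by apply: eq_bigr => i _; rewrite cabs2 mxE.
Qed.

Lemma adjM m n p (A : 'M[C]_(m,n)) (B : 'M[C]_(n,p)) : adj (A *m B) = adj B *m adj A.
Proof.
apply/matrixP => i j; rewrite !mxE rmorph_sum; apply: eq_bigr => l _.
by rewrite !mxE rmorphM mulrC.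
Qed.

Lemma adjK m n (A : 'M[C]_(m,n)) : adj (adj A) = A.
Proof. by apply/matrixP => i j; rewrite !mxE conjcK. Qed.

Lemma unitary_sqs n (F : 'M[C]_n) (w : 'cV[C]_n) :
  adj F *m F = 1%:M -> sqs [set: 'I_n] (F *m w) = sqs [set: 'I_n] w.
Proof.
move=> hF; apply: (@complexI R); rewrite !sqs_adj adjM.
by rewrite -mulmxA (mulmxA (adj F)) hF mul1mx.
Qed.

Lemma adj_row_mx n (F : 'M[C]_n) : adj (row_mx F (1%:M : 'M[C]_n)) = col_mx (adj F) 1%:M.
Proof.
apply/matrixP => i j; rewrite -(@fintype.splitK n n i); case: (fintype.split i) => i' /=.
  by rewrite col_mxEu [LHS]mxE row_mxEl !mxE.
rewrite col_mxEd [LHS]mxE row_mxEr !mxE eq_sym.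
exact: conjc_nat.
Qed.

Lemma step_eq n (F : 'M[C]_n) (xhat e : 'cV[C]_n) k t (x : 'cV[C]_(n + n)) :
  adj F *m F = 1%:M ->
  iht_step (F *m xhat + e) (row_mx F 1%:M) k t x =
  col_mx (hthr k (xhat + adj F *m (e - dsubmx x)))
         (hthr t (e + F *m (xhat - usubmx x))).
Proof.
move=> hF; rewrite /iht_step /hthr2 -[x in LHS]vsubmxK.
rewrite mul_row_col mul1mx adj_row_mx mul_col_mx mul1mx add_col_mx col_mxKu col_mxKd.
congr (col_mx (hthr _ _) (hthr _ _)).
  by rewrite !mulmxBr !mulmxDr !mulmxA hF !mul1mx zmodE1.
by rewrite mulmxBr zmodE2.
Qed.

End Mat.


Lemma count_lt_nat (n k : nat) :
  (\sum_(0 <= m < n) (if (m < k)%N then 1 else 0))%N = minn k n.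
Proof.
elim: n => [|n IH]; first by rewrite big_nil minn0.
rewrite big_nat_recr //= IH; case: ifP => h; lia.
Qed.

Lemma card_ord_lt (n k : nat) : #|[set m : 'I_n | (m < k)%N]| = minn k n.
Proof.
rewrite -sum1_card -count_lt_nat big_mkord [RHS]big_mkcond /=.
rewrite [LHS]big_mkcond /=; apply: eq_bigr => i _; by rewrite inE.
Qed.

Section Thr.
Variable R : realType.
Local Notation C := R[i].

Definition keep n (z : 'cV[C]_n) k : {set 'I_n} :=
  [set i | (#|[set j | precedes z j i]| < k)%N].

Lemma hthrE n k (z : 'cV[C]_n) i :
  hthr k z i ord0 = if i \in keep z k then z i ord0 else 0.
Proof. by rewrite /hthr mxE inE. Qed.

Lemma prec_irr n (z : 'cV[C]_n) i : ~~ precedes z i i.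
Proof. by rewrite /precedes ltxx ltnn andbF. Qed.

Lemma prec_trans n (z : 'cV[C]_n) a b c :
  precedes z a b -> precedes z b c -> precedes z a c.
Proof.
rewrite /precedes => /orP[h1|/andP[/eqP e1 h1]] /orP[h2|/andP[/eqP e2 h2]].
- by rewrite (lt_trans h2 h1).
- by rewrite -e2 h1.
- by rewrite e1 h2.
- by rewrite e1 e2 eqxx (ltn_trans h1 h2) orbT.
Qed.

Lemma prec_total n (z : 'cV[C]_n) a b :
  a != b -> precedes z a b || precedes z b a.
Proof.
move=> ab; rewrite /precedes.
case: (ltgtP (cabs (z b ord0)) (cabs (z a ord0))) => //= h.
case: (ltngtP a b) => // /val_inj e.
by rewrite e eqxx in ab.
Qed.

Definition rk n (z : 'cV[C]_n) i := #|[set j | precedes z j i]|.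

Lemma rk_lt n (z : 'cV[C]_n) i : (rk z i < n)%N.
Proof.
rewrite /rk -[X in (_ < X)%N]card_ord -cardsT; apply: proper_card.
apply/properP; split; first exact: finset.subsetT.
by exists i; rewrite ?finset.in_setT // inE prec_irr.
Qed.

Lemma rk_mono n (z : 'cV[C]_n) a b : precedes z a b -> (rk z a < rk z b)%N.
Proof.
move=> ab; apply: proper_card; apply/properP; split.
  by apply/fintype.subsetP => j; rewrite !inE => ja; exact: prec_trans ja ab.
by exists a; rewrite !inE ?prec_irr.
Qed.

Lemma rk_inj n (z : 'cV[C]_n) : injective (rk z).
Proof.
move=> a b e; apply/eqP; apply: contraT => ab.
case/orP: (prec_total z ab) => /(rk_mono) h; rewrite e in h; by rewrite ltnn in h.
Qed.

Lemma keep_pre n (z : 'cV[C]_n) k :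
  keep z k = (fun i => Ordinal (rk_lt z i)) @^-1: [set m : 'I_n | (m < k)%N].
Proof. by apply/setP => i; rewrite !inE. Qed.

Lemma card_keep n (z : 'cV[C]_n) k : #|keep z k| = minn k n.
Proof.
rewrite keep_pre card_preimset ?card_ord_lt //.
by move=> a b /(congr1 val) /= /rk_inj.
Qed.

Lemma keep_cmp n (z : 'cV[C]_n) k i j :
  i \in keep z k -> j \notin keep z k -> cabs (z j ord0) <= cabs (z i ord0).
Proof.
move=> ik; apply: contraR; rewrite -ltNge => h.
have pji : precedes z j i by rewrite /precedes h.
move: ik; rewrite !inE => ik; have := rk_mono pji; rewrite /rk => h2.
exact: ltn_trans h2 ik.
Qed.

End Thr.


Section Thr2.
Variable R : realType.
Local Notation C := R[i].

Lemma sum_swap (I : finType) (A B : {set I}) (f : I -> R) :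
  (#|B| <= #|A|)%N -> (forall i j, i \in A -> j \in B -> f j <= f i) ->
  (forall i, 0 <= f i) ->
  \sum_(j in B) f j <= \sum_(i in A) f i.
Proof.
move=> cBA hf f0.
have h1 : forall i, i \in A -> \sum_(j in B) f j <= #|B|%:R * f i.
  move=> i iA; rewrite mulr_natl -sumr_const.
  by apply: ler_sum => j jB; exact: hf.
have h2 : #|A|%:R * \sum_(j in B) f j <= #|B|%:R * \sum_(i in A) f i.
  rewrite [X in _ <= X]mulr_sumr [X in X <= _]mulr_natl -sumr_const.
  by apply: ler_sum => i iA; apply: h1.
have SA : 0 <= \sum_(i in A) f i by apply: sumr_ge0.
have SB : 0 <= \sum_(j in B) f j by apply: sumr_ge0.
case: (posnP #|A|) => hA.
  have -> : B = finset.set0.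
    by apply/eqP; rewrite -cards_eq0 -leqn0 -hA.
  by rewrite big_set0.
have hBA : (#|B|%:R : R) <= #|A|%:R by rewrite ler_nat.
have hA' : (0 : R) < #|A|%:R by rewrite ltr0n.
nra.
Qed.

Lemma thr_bound n k (z x : 'cV[C]_n) (S : {set 'I_n}) :
  (#|S| <= k)%N -> (forall i, i \notin S -> x i ord0 = 0) ->
  sqs [set: 'I_n] (hthr k z - x) <= 3 * sqs (S :|: keep z k) (z - x).
Proof.
move=> cS hx; set K := keep z k.
set g := fun i => cabs ((z - x) i ord0) ^+ 2.
have g0 : forall i, 0 <= g i by move=> i; exact: sqr_ge0.
have step1 : sqs [set: 'I_n] (hthr k z - x) =
   \sum_(i in K) g i + \sum_(i in S :\: K) cabs (x i ord0) ^+ 2.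
  rewrite /sqs [in RHS]big_mkcond [X in _ = _ + X]big_mkcond -big_split /=.
  rewrite big_mkcond /=; apply: eq_bigr => i _; rewrite finset.in_setT.
  have E : (hthr k z - x) i ord0 = hthr k z i ord0 - x i ord0 by rewrite !mxE.
  rewrite /g E hthrE !mxE.
  rewrite [i \in S :\: K]inE; case: (i \in K) => /=.
    by rewrite addr0.
  case iS: (i \in S) => /=; first by rewrite sub0r cabsN add0r.
  by rewrite hx ?iS // subr0 cabs0 expr0n /= addr0.
have step2 : \sum_(i in S :\: K) cabs (x i ord0) ^+ 2 <=
   \sum_(i in S :\: K) (2 * g i + 2 * cabs (z i ord0) ^+ 2).
  apply: ler_sum => i _; rewrite /g.
  have e : x i ord0 = z i ord0 + - ((z - x) i ord0) by rewrite !mxE opprB addrC subrK.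
  have := cabsD (z i ord0) (- ((z - x) i ord0)); rewrite -e cabsN => h.
  have := cabs_ge0 (x i ord0); have := cabs_ge0 (z i ord0);
  have := cabs_ge0 ((z - x) i ord0).
  set a := cabs (z i ord0); set b := cabs ((z - x) i ord0); set c := cabs (x i ord0).
  move=> hb ha hc; apply: (le_trans (y := (a + b) ^+ 2)); first by rewrite lerXn2r ?nnegrE ?addr_ge0.
  have := sqr_ge0 (a - b); lra.
have step3 : \sum_(i in S :\: K) cabs (z i ord0) ^+ 2 <= \sum_(i in K :\: S) g i.
  have -> : \sum_(i in K :\: S) g i = \sum_(i in K :\: S) cabs (z i ord0) ^+ 2.
    apply: eq_bigr => i; rewrite inE => /andP[iS _].
    by rewrite /g !mxE hx // subr0.
  apply: sum_swap; last by move=> i; exact: sqr_ge0.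
    have hS : (#|S| <= #|K|)%N.
      have hh : (#|S| <= n)%N by rewrite -[X in (_ <= X)%N](card_ord n) max_card.
      by rewrite card_keep leq_min cS hh.
    rewrite !cardsD finset.setIC; lia.
  move=> i j; rewrite !finset.in_setD => /andP[_ iK] /andP[jK _].
  have := keep_cmp iK jK; have := cabs_ge0 (z j ord0) => h1 h2.
  by rewrite lerXn2r ?nnegrE // (le_trans h1).
have step4 : \sum_(i in K) g i + (2 * \sum_(i in S :\: K) g i + 2 * \sum_(i in K :\: S) g i)
   <= 3 * \sum_(i in S :|: K) g i.
  rewrite !mulr_sumr !(big_mkcond (fun i => i \in _)) -!big_split /=.
  apply: ler_sum => i _; rewrite !finset.in_setD !finset.in_setU.
  by case: (i \in K); case: (i \in S); rewrite /= ?mulr0 ?addr0 ?add0r; have := g0 i; lra.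
rewrite step1; apply: le_trans step4.
rewrite lerD2l; apply: (le_trans step2); rewrite big_split /= -!mulr_sumr.
by rewrite lerD2l ler_pM2l.
Qed.

End Thr2.


Lemma moreover_bound (R : realType) (rho M eps : R) (T : nat) :
  0 < rho < 1 -> 0 <= M -> 0 < eps ->
  (ln (1 / eps) + ln M) / ln (1 / rho) <= T%:R -> rho ^+ T.+1 * M <= eps.
Proof.
move=> /andP[r0 r1] M0 e0 h.
have [->|Mp] := eqVneq M 0; first by rewrite mulr0 ltW.
have Mpos : 0 < M by rewrite lt_def Mp M0.
have l0 : 0 < ln (1 / rho) by apply: ln_gt0; rewrite div1r invf_gt1.
rewrite ler_pdivrMr // in h.
rewrite !div1r !lnV ?posrE // in h l0.
have h2 : ln (M * rho ^+ T) <= ln eps.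
  rewrite lnM ?posrE ?exprn_gt0 // lnXn // -mulr_natl; lra.
rewrite ler_ln ?posrE ?mulr_gt0 ?exprn_gt0 // in h2.
rewrite exprS -mulrA; apply: le_trans h2.
rewrite [M * _]mulrC ler_piMl ?mulr_ge0 ?exprn_ge0 ?ltW //.
Qed.


Lemma fld1 (R : realType) (x y : R) : 1 != y -> x + y * (x / (1 - y)) = x / (1 - y).
Proof. move=> h; have h' : 1 - y != 0 by rewrite subr_eq0. field. exact: h'. Qed.

Lemma arithB (R : realFieldType) (s t D H P A V a : R) :
  0 <= s -> 0 <= D -> 0 <= H -> 0 <= P -> 0 <= t -> t * (1 - 2 * s) = 2 ->
  A <= P * H + t * D -> V <= D + s * A -> a <= 2 * D + 2 * s * V ->
  a <= (2 * s) ^+ 2 * P * H + t * D.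
Proof.
move=> s0 D0 H0 P0 t0 ht hA hV ha.
have g1 : s * A <= s * (P * H + t * D) by rewrite ler_wpM2l.
have g2 : s * V <= s * (D + s * A) by rewrite ler_wpM2l.
have g3 : s * (s * A) <= s * (s * (P * H + t * D)) by rewrite ler_wpM2l.
have h1 : t * D - 2 * s * t * D = 2 * D.
  by rewrite -[in RHS]ht; ring.
have h2 : s * t * D - 2 * s * s * t * D = 2 * s * D.
  by rewrite -[in RHS]ht; ring.
have f1 : 0 <= s * s * P * H by rewrite !mulr_ge0.
have f2 : 0 <= s * D by rewrite !mulr_ge0.
have f3 : 0 <= s * s * t * D by rewrite !mulr_ge0.
rewrite expr2.
lra.
Qed.

Section Main.
Variable R : realType.
Local Notation C := R[i].
Variables (n : nat) (F : 'M[C]_n) (c : R) (xhat e : 'cV[C]_n) (k t : nat).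
Hypotheses (n1 : (1 <= n)%N) (hF1 : adj F *m F = 1%:M) (hF2 : F *m adj F = 1%:M)
  (c0 : 0 < c) (hFc : forall i j, cabs (F i j) ^+ 2 <= c / n%:R)
  (he : sparse t e).

Definition it j := iter j (iht_step (F *m xhat + e) (row_mx F 1%:M) k t) 0.
Local Notation u j := (usubmx (it j)).
Local Notation v j := (dsubmx (it j)).
Local Notation xh := (hthr k xhat).
Local Notation xt := (tthr k xhat).
Local Notation g := (c / n%:R).
Local Notation s := (Num.sqrt (c * k%:R * t%:R / n%:R)).

Lemma u_succ j : u j.+1 = hthr k (xhat + adj F *m (e - v j)).
Proof. by rewrite /it iterS step_eq // col_mxKu. Qed.

Lemma v_succ j : v j.+1 = hthr t (e + F *m (xhat - u j)).
Proof. by rewrite /it iterS step_eq // col_mxKd. Qed.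

Lemma u0 : u 0 = 0.
Proof. by apply/matrixP => i j; rewrite !mxE. Qed.

Lemma v0 : v 0 = 0.
Proof. by apply/matrixP => i j; rewrite !mxE. Qed.

Definition supp_in (W : {set 'I_n}) (w : 'cV[C]_n) := forall i, i \notin W -> w i ord0 = 0.

Lemma supp_hthr m (z : 'cV[C]_n) : supp_in (keep z m) (hthr m z).
Proof. by move=> i /negbTE hi; rewrite hthrE hi. Qed.

Lemma card_keep_le m (z : 'cV[C]_n) : (#|keep z m| <= m)%N.
Proof. by rewrite card_keep geq_minl. Qed.

Lemma supp_u j : exists2 W : {set 'I_n}, (#|W| <= k)%N & supp_in W (u j).
Proof.
case: j => [|j]; first by exists finset.set0; rewrite ?cards0 // u0 => i _; rewrite mxE.
by rewrite u_succ; exists (keep (xhat + adj F *m (e - v j)) k); [exact: card_keep_le | exact: supp_hthr].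
Qed.

Lemma supp_v j : exists2 W : {set 'I_n}, (#|W| <= t)%N & supp_in W (v j).
Proof.
case: j => [|j]; first by exists finset.set0; rewrite ?cards0 // v0 => i _; rewrite mxE.
by rewrite v_succ; exists (keep (e + F *m (xhat - u j)) t); [exact: card_keep_le | exact: supp_hthr].
Qed.

Definition Se := [set i | e i ord0 != 0].

Lemma supp_e : supp_in Se e.
Proof. by move=> i; rewrite inE negbK => /eqP. Qed.

Lemma card_Se : (#|Se| <= t)%N.
Proof. exact: he. Qed.

Lemma supp_B W1 W2 (w1 w2 : 'cV[C]_n) :
  supp_in W1 w1 -> supp_in W2 w2 -> supp_in (W1 :|: W2) (w1 - w2).
Proof.
move=> h1 h2 i; rewrite finset.in_setU negb_or => /andP[i1 i2].
by rewrite !mxE h1 // h2 // subr0.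
Qed.

Lemma card_U (W1 W2 : {set 'I_n}) p q :
  (#|W1| <= p)%N -> (#|W2| <= q)%N -> (#|W1 :|: W2| <= p + q)%N.
Proof. by move=> h1 h2; rewrite cardsU; lia. Qed.

Lemma g0 : 0 <= g.
Proof. apply: divr_ge0; [exact: ltW | exact: ler0n]. Qed.

Lemma s0 : 0 <= s.
Proof. exact: sqrtr_ge0. Qed.

Lemma adjF_bound i j : cabs (adj F i j) ^+ 2 <= g.
Proof. by rewrite /adj mxE cabsJ; exact: hFc. Qed.

Lemma sqrt_coh (M : 'M[C]_n) (U W : {set 'I_n}) (w : 'cV[C]_n) p q :
  (forall i j, cabs (M i j) ^+ 2 <= g) -> (#|U| <= p)%N -> (#|W| <= q)%N ->
  supp_in W w ->
  Num.sqrt (sqs U (M *m w)) <= Num.sqrt (p%:R * q%:R * g) * norm2 w.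
Proof.
move=> hM hU hW hw; have pq0 : 0 <= p%:R * q%:R * g by apply: mulr_ge0; [apply: mulr_ge0; exact: ler0n | exact: g0].
rewrite norm2E -sqrtrM // ler_sqrt; last by rewrite mulr_ge0 ?sqs_ge0.
apply: (le_trans (coh U hM hw)); rewrite ler_wpM2r ?sqs_ge0 // mulrA.
by rewrite ler_wpM2r ?g0 // ler_pM ?ler_nat.
Qed.

Lemma s2_ge0 : 0 <= c * k%:R * t%:R / n%:R.
Proof.
apply: divr_ge0; last exact: ler0n.
apply: mulr_ge0; last exact: ler0n.
apply: mulr_ge0; [exact: ltW | exact: ler0n].
Qed.

Lemma s_sq : s ^+ 2 = c * k%:R * t%:R / n%:R.
Proof. by rewrite sqr_sqrtr // s2_ge0. Qed.

Lemma sq4 : Num.sqrt ((k + k)%N%:R * (t + t)%N%:R * g) = 2 * s.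
Proof.
have -> : (k + k)%N%:R * (t + t)%N%:R * g = 2 ^+ 2 * (c * k%:R * t%:R / n%:R).
  by rewrite !natrD; ring.
by rewrite sqrtrM ?sqr_ge0 // sqrtr_sqr ger0_norm.
Qed.

Lemma sq4' : Num.sqrt ((t + t)%N%:R * (k + k)%N%:R * g) = 2 * s.
Proof. by rewrite [(t + t)%N%:R * _]mulrC sq4. Qed.

Lemma sq2 : Num.sqrt ((k + k)%N%:R * t%:R * g) = Num.sqrt 2 * s.
Proof.
have -> : (k + k)%N%:R * t%:R * g = 2 * (c * k%:R * t%:R / n%:R).
  by rewrite !natrD; ring.
by rewrite sqrtrM.
Qed.

Lemma sq2' : Num.sqrt (t%:R * (k + k)%N%:R * g) = Num.sqrt 2 * s.
Proof. by rewrite [t%:R * _]mulrC sq2. Qed.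


Lemma E1 (a : 'cV[C]_n) : xhat + adj F *m (e - a) - xh = xt - adj F *m (a - e).
Proof. by rewrite /tthr -(opprB a e) mulmxN addrAC. Qed.

Lemma E2 (a : 'cV[C]_n) : e + F *m (xhat - a) - e = F *m xt - F *m (a - xh).
Proof.
rewrite addrAC subrr add0r /tthr -mulmxBr; congr (_ *m _).
by rewrite opprB addrA subrK.
Qed.

Lemma E3 (a : 'cV[C]_n) : xhat + adj F *m (e - a) - xh = xt + adj F *m e - adj F *m a.
Proof. by rewrite /tthr mulmxBr addrAC addrA. Qed.

Lemma E4 (a : 'cV[C]_n) : e + F *m (xhat - a) = e + F *m xt - F *m (a - xh).
Proof. by rewrite -addrA -mulmxBr /tthr opprB addrA subrK. Qed.

Lemma sqrt_sub (U : {set 'I_n}) (w : 'cV[C]_n) : Num.sqrt (sqs U w) <= norm2 w.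
Proof. by rewrite norm2E ler_sqrt ?sqs_ge0 // sqs_sub // finset.subsetT. Qed.

Lemma thr_sqrt m (z x : 'cV[C]_n) (S : {set 'I_n}) :
  (#|S| <= m)%N -> supp_in S x ->
  norm2 (hthr m z - x) <= Num.sqrt 3 * Num.sqrt (sqs (S :|: keep z m) (z - x)).
Proof.
move=> cS hx; rewrite norm2E -sqrtrM // ler_sqrt; last by rewrite mulr_ge0 ?sqs_ge0.
exact: thr_bound.
Qed.

Lemma A1 j : norm2 (u j.+1 - xh) <= Num.sqrt 3 * (norm2 xt + 2 * s * norm2 (v j - e)).
Proof.
rewrite u_succ; apply: le_trans (thr_sqrt _ (card_keep_le k xhat) (@supp_hthr k xhat)) _.
rewrite ler_wpM2l ?sqrtr_ge0 // E1; apply: le_trans (minkowskiB _ _ _) _.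
rewrite lerD ?sqrt_sub //.
have [W hW sW] := supp_v j.
apply: le_trans (sqrt_coh (p := (k + k)%N) (q := (t + t)%N) adjF_bound _ _ (supp_B sW supp_e)) _.
- by apply: card_U; exact: card_keep_le.
- by apply: card_U => //; exact: card_Se.
by rewrite sq4.
Qed.

Lemma A2 j : norm2 (v j.+1 - e) <= Num.sqrt 3 * (norm2 xt + 2 * s * norm2 (u j - xh)).
Proof.
rewrite v_succ; apply: le_trans (thr_sqrt _ card_Se supp_e) _.
rewrite ler_wpM2l ?sqrtr_ge0 // E2; apply: le_trans (minkowskiB _ _ _) _.
rewrite lerD //.
  by apply: le_trans (sqrt_sub _ _) _; rewrite !norm2E unitary_sqs.
have [W hW sW] := supp_u j.
apply: le_trans (sqrt_coh (p := (t + t)%N) (q := (k + k)%N) hFc _ _ (supp_B sW (@supp_hthr k xhat))) _.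
- by apply: card_U; [exact: card_Se | exact: card_keep_le].
- by apply: card_U => //; exact: card_keep_le.
by rewrite sq4'.
Qed.


Lemma sqrt3_le2 : Num.sqrt 3 <= 2 :> R.
Proof.
rewrite -[X in _ <= X](@ger0_norm _ 2) // -sqrtr_sqr ler_sqrt ?sqr_ge0 //.
by rewrite expr2 -natrM ler_nat.
Qed.

Lemma norm_adjF (w : 'cV[C]_n) : norm2 (adj F *m w) = norm2 w.
Proof. by rewrite !norm2E unitary_sqs // adjK. Qed.

Lemma norm_F (w : 'cV[C]_n) : norm2 (F *m w) = norm2 w.
Proof. by rewrite !norm2E unitary_sqs. Qed.

Lemma B1 j : norm2 (u j.+1 - xh) <=
  2 * (norm2 xt + norm2 e) + 2 * Num.sqrt 2 * s * norm2 (v j).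
Proof.
rewrite u_succ; apply: le_trans (thr_sqrt _ (card_keep_le k xhat) (@supp_hthr k xhat)) _.
rewrite E3.
set Q := norm2 xt + norm2 e + Num.sqrt 2 * s * norm2 (v j).
have hQ : Num.sqrt (sqs (keep xhat k :|: keep (xhat + adj F *m (e - v j)) k)
     (xt + adj F *m e - adj F *m v j)) <= Q.
  apply: le_trans (minkowskiB _ _ _) _; apply: lerD.
    apply: le_trans (minkowski _ _ _) _; apply: lerD; first exact: sqrt_sub.
    by rewrite -(norm_adjF e); exact: sqrt_sub.
  have [W hW sW] := supp_v j.
  apply: le_trans (sqrt_coh (p := (k + k)%N) (q := t) adjF_bound _ hW sW) _.
    by apply: card_U; exact: card_keep_le.
  by rewrite sq2.
have Q0 : 0 <= Q by rewrite !addr_ge0 ?norm2_ge0 // !mulr_ge0 ?sqrtr_ge0 ?norm2_ge0.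
apply: le_trans (ler_wpM2l (sqrtr_ge0 3) hQ) _.
rewrite (_ : _ + _ = 2 * Q); last by rewrite /Q; ring.
by rewrite ler_wpM2r // sqrt3_le2.
Qed.

Lemma hthr_sqs m (z : 'cV[C]_n) : sqs [set: 'I_n] (hthr m z) = sqs (keep z m) z.
Proof.
rewrite /sqs [RHS]big_mkcond [LHS]big_mkcond; apply: eq_bigr => i _.
rewrite finset.in_setT hthrE; case: ifP => // _.
by rewrite cabs0 expr0n.
Qed.

Lemma B2 j : norm2 (v j.+1) <= norm2 e + norm2 xt + Num.sqrt 2 * s * norm2 (u j - xh).
Proof.
rewrite v_succ norm2E hthr_sqs E4.
apply: le_trans (minkowskiB _ _ _) _; apply: lerD.
  apply: le_trans (minkowski _ _ _) _; apply: lerD; first exact: sqrt_sub.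
  by rewrite -(norm_F xt); exact: sqrt_sub.
have [W hW sW] := supp_u j.
apply: le_trans (sqrt_coh (p := t) (q := (k + k)%N) hFc (card_keep_le _ _) _ (supp_B sW (@supp_hthr k xhat))) _.
  by apply: card_U => //; exact: card_keep_le.
by rewrite sq2'.
Qed.


Local Notation M := (Num.sqrt (norm2 xh ^+ 2 + norm2 e ^+ 2)).

Lemma norm2N (w : 'cV[C]_n) : norm2 (- w) = norm2 w.
Proof. by rewrite !norm2E sqsN. Qed.

Lemma norm2_0 : norm2 (0 : 'cV[C]_n) = 0.
Proof. by rewrite norm2E /sqs big1 ?sqrtr0 // => i _; rewrite mxE cabs0 expr0n. Qed.

Lemma norm_le_M1 : norm2 xh <= M.
Proof.
rewrite -[X in X <= _](@ger0_norm _ (norm2 xh)) ?norm2_ge0 // -sqrtr_sqr ler_sqrt.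
  by rewrite lerDl sqr_ge0.
by rewrite addr_ge0 ?sqr_ge0.
Qed.

Lemma norm_le_M2 : norm2 e <= M.
Proof.
rewrite -[X in X <= _](@ger0_norm _ (norm2 e)) ?norm2_ge0 // -sqrtr_sqr ler_sqrt.
  by rewrite lerDr sqr_ge0.
by rewrite addr_ge0 ?sqr_ge0.
Qed.

Local Notation L := (2 * Num.sqrt 3 * s).
Local Notation Cc := (Num.sqrt 3 / (1 - L)).

Lemma indA (hl : L < 1) j :
  (norm2 (u j - xh) <= L ^+ j * M + Cc * norm2 xt) /\
  (norm2 (v j - e) <= L ^+ j * M + Cc * norm2 xt).
Proof.
have L0 : 0 <= L by rewrite !mulr_ge0 ?sqrtr_ge0.
have Cc0 : 0 <= Cc by rewrite divr_ge0 ?sqrtr_ge0 // subr_ge0 ltW.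
have X0 := norm2_ge0 xt.
have eC : Num.sqrt 3 + L * Cc = Cc.
  apply: fld1; apply/eqP => h; by rewrite -h ltxx in hl.
have step : forall j B, B <= L ^+ j * M + Cc * norm2 xt ->
    Num.sqrt 3 * (norm2 xt + 2 * s * B) <= L ^+ j.+1 * M + Cc * norm2 xt.
  move=> j' B hB.
  apply: (@le_trans _ _ (Num.sqrt 3 * (norm2 xt + 2 * s * (L ^+ j' * M + Cc * norm2 xt)))).
    by rewrite ler_wpM2l ?sqrtr_ge0 // lerD2l ler_wpM2l // mulr_ge0 // s0.
  rewrite -[X in _ <= _ + X * _]eC [L ^+ j'.+1]exprS.
  by rewrite le_eqVlt; apply/orP; left; apply/eqP; ring.
elim: j => [|j [IHu IHv]].
  rewrite u0 v0 !sub0r !norm2N expr0 !mul1r.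
  by split; apply: ler_wpDr; [exact: mulr_ge0 | exact: norm_le_M1 | exact: mulr_ge0 | exact: norm_le_M2].
split; [apply: le_trans (A1 j) _ | apply: le_trans (A2 j) _]; exact: step.
Qed.

Local Notation rb := (2 * Num.sqrt 2 * s).
Local Notation tb := (2 / (1 - rb)).
Local Notation D := (norm2 xt + norm2 e).

Lemma indB (hr : rb < 1) j :
  (norm2 (u j - xh) <= rb ^+ j * norm2 xh + tb * D) /\
  (norm2 (u j.+1 - xh) <= rb ^+ j.+1 * norm2 xh + tb * D).
Proof.
have sg0 : 0 <= Num.sqrt 2 * s by rewrite mulr_ge0 ?sqrtr_ge0 ?s0.
have es : rb = 2 * (Num.sqrt 2 * s) by rewrite mulrA.
have r0 : 0 <= rb by rewrite es mulr_ge0.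
have nz : 1 - rb != 0 by rewrite subr_eq0 (gt_eqF hr).
have ht : tb * (1 - rb) = 2 by rewrite divfK.
have t0 : 0 <= tb by rewrite divr_ge0 // subr_ge0 ltW.
have t2 : 2 <= tb.
  have := mulr_ge0 t0 r0; move: ht; rewrite mulrBr mulr1; lra.
have D0 : 0 <= D by rewrite addr_ge0 ?norm2_ge0.
have H0 := norm2_ge0 xh.
elim: j => [|j [IH1 IH2]].
  split.
    rewrite u0 sub0r norm2N expr0 mul1r; apply: ler_wpDr => //; exact: mulr_ge0.
  apply: le_trans (B1 0) _; rewrite v0 norm2_0 mulr0 addr0 expr1.
  have := ler_wpM2r D0 t2; have := mulr_ge0 r0 H0; lra.
split; first exact: IH2.
have hV := B2 j; have ha := B1 j.+1.
rewrite es in ha; rewrite [norm2 e + _]addrC in hV.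
have -> : rb ^+ j.+2 = (2 * (Num.sqrt 2 * s)) ^+ 2 * rb ^+ j by rewrite -es -exprD add2n.
rewrite es in ht.
apply: (arithB (A := norm2 (u j - xh)) (V := norm2 (v j.+1))) => //.
  exact: exprn_ge0.
by rewrite es.
Qed.

Lemma sqrt27 : Num.sqrt 27 = 3 * Num.sqrt 3 :> R.
Proof.
have -> : (27 : R) = 3 ^+ 2 * 3 by rewrite -natrX -natrM.
by rewrite sqrtrM ?sqr_ge0 // sqrtr_sqr ger0_norm.
Qed.

Lemma partA : 0 < Num.sqrt 27 * s < 1 ->
  (forall T : nat, (1 <= T)%N ->
     norm2 (usubmx (IHT (F *m xhat + e) (row_mx F (1%:M : 'M[R[i]]_n)) k t T) - xh) <=
       (Num.sqrt 27 * s) ^+ T.+1 * M +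
       Num.sqrt 3 * Num.sqrt (1 + 2 * s) / (1 - Num.sqrt 27 * s) * norm2 xt) /\
  (forall (eps : R) (T : nat), 0 < eps < 1 -> (1 <= T)%N ->
     (ln (1 / eps) + ln M) / ln (1 / (Num.sqrt 27 * s)) <= T%:R ->
     norm2 (usubmx (IHT (F *m xhat + e) (row_mx F (1%:M : 'M[R[i]]_n)) k t T) - xh) <=
       Num.sqrt 3 * Num.sqrt (1 + 2 * s) / (1 - Num.sqrt 27 * s) * norm2 xt + eps).
Proof.
move=> /andP[r0 r1].
have r30 : 0 <= Num.sqrt 3 :> R := sqrtr_ge0 _.
have L0 : 0 <= L by rewrite !mulr_ge0 // s0.
have Lr : L <= Num.sqrt 27 * s.
  by rewrite sqrt27 ler_wpM2r ?s0 // ler_wpM2r // ler_nat.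
have hl : L < 1 := le_lt_trans Lr r1.
have M0 : 0 <= M := sqrtr_ge0 _.
have X0 := norm2_ge0 xt.
have main : forall T, norm2 (usubmx (it T.+1) - xh) <=
    (Num.sqrt 27 * s) ^+ T.+1 * M +
    Num.sqrt 3 * Num.sqrt (1 + 2 * s) / (1 - Num.sqrt 27 * s) * norm2 xt.
  move=> T; have [h _] := indA hl T.+1; apply: le_trans h _; apply: lerD.
    by rewrite ler_wpM2r // lerXn2r // nnegrE ltW.
  rewrite ler_wpM2r //.
  apply: (@le_trans _ _ (Num.sqrt 3 / (1 - Num.sqrt 27 * s))).
    rewrite ler_wpM2l // lef_pV2 ?posrE ?subr_gt0 //.
    by rewrite lerD2l lerN2.
  rewrite ler_wpM2r //; first by rewrite invr_ge0 subr_ge0 ltW.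
  apply: ler_peMr => //; rewrite -[X in X <= _]sqrtr1 ler_sqrt; last by rewrite addr_ge0 // mulr_ge0 // s0.
  by rewrite lerDl mulr_ge0 // s0.
split; first by move=> T _; exact: main.
move=> eps T /andP[e0 e1] _ hT.
apply: le_trans (main T) _; rewrite addrC lerD2l.
by apply: moreover_bound => //; rewrite r0 r1.
Qed.

Lemma partB : 0 < 2 * Num.sqrt 2 * s < 1 ->
  (forall T : nat, (1 <= T)%N ->
     norm2 (usubmx (IHT (F *m xhat + e) (row_mx F (1%:M : 'M[R[i]]_n)) k t T) - xh) <=
       (2 * Num.sqrt 2 * s) ^+ T.+1 * norm2 xh +
       2 / (1 - 2 * Num.sqrt 2 * s) * (norm2 xt + norm2 e)) /\
  (forall (eps : R) (T : nat), 0 < eps < 1 -> (1 <= T)%N ->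
     (ln (1 / eps) + ln (norm2 xh)) / ln (1 / (2 * Num.sqrt 2 * s)) <= T%:R ->
     norm2 (usubmx (IHT (F *m xhat + e) (row_mx F (1%:M : 'M[R[i]]_n)) k t T) - xh) <=
       2 / (1 - 2 * Num.sqrt 2 * s) * (norm2 xt + norm2 e) + eps).
Proof.
move=> /andP[r0 r1].
have main : forall T, norm2 (usubmx (it T.+1) - xh) <=
   (2 * Num.sqrt 2 * s) ^+ T.+1 * norm2 xh + 2 / (1 - 2 * Num.sqrt 2 * s) * (norm2 xt + norm2 e).
  by move=> T; have [h _] := indB r1 T.+1.
split; first by move=> T _; exact: main.
move=> eps T /andP[e0 e1] _ hT.
apply: le_trans (main T) _; rewrite addrC lerD2l.
by apply: moreover_bound => //; rewrite ?r0 ?r1 ?norm2_ge0.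
Qed.

End Main.

Unset Implicit Arguments.

Theorem theorem1 (R : realType) (n : nat) (F : 'M[R[i]]_n) (c : R)
  (xhat e : 'cV[R[i]]_n) (k t : nat) :
  (1 <= n)%N -> unitary F -> 0 < c ->
  (forall i j, cabs (F i j) ^+ 2 <= c / n%:R) ->
  (1 <= t)%N -> sparse t e -> (1 <= k <= n)%N ->
  let A := row_mx F (1%:M : 'M[R[i]]_n) in
  let y := F *m xhat + e in
  let xh := hthr k xhat in
  let xt := tthr k xhat in
  let out T := usubmx (IHT y A k t T) in
  let s := Num.sqrt (c * k%:R * t%:R / n%:R) in
  (* part (a) *)
  (let rho := Num.sqrt 27 * s in
   let tau := Num.sqrt 3 * Num.sqrt (1 + 2 * s) / (1 - rho) in
   0 < rho < 1 ->
   (forall T : nat, (1 <= T)%N ->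
      norm2 (out T - xh) <=
        rho ^+ T.+1 * Num.sqrt (norm2 xh ^+ 2 + norm2 e ^+ 2) + tau * norm2 xt) /\
   (forall (eps : R) (T : nat), 0 < eps < 1 -> (1 <= T)%N ->
      (ln (1 / eps) + ln (Num.sqrt (norm2 xh ^+ 2 + norm2 e ^+ 2))) / ln (1 / rho)
        <= T%:R ->
      norm2 (out T - xh) <= tau * norm2 xt + eps)) /\
  (* part (b) *)
  (let rho := 2 * Num.sqrt 2 * s in
   let tau := 2 / (1 - rho) in
   0 < rho < 1 ->
   (forall T : nat, (1 <= T)%N ->
      norm2 (out T - xh) <= rho ^+ T.+1 * norm2 xh + tau * (norm2 xt + norm2 e)) /\
   (forall (eps : R) (T : nat), 0 < eps < 1 -> (1 <= T)%N ->
      (ln (1 / eps) + ln (norm2 xh)) / ln (1 / rho) <= T%:R ->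
      norm2 (out T - xh) <= tau * (norm2 xt + norm2 e) + eps)).
Proof.
move=> n1 [hF1 hF2] c0 hFc _ he _.
split; [exact: (partA xhat n1 hF1 c0 hFc he) | exact: (partB xhat e n1 hF1 hF2 c0 hFc)].
Qed.
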